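(* Let $m\ge2$, $K$ an algebraic number field, $a(z)\in K[z]$ monic of degree $m$, $b(z)\in K[z]$ of degree $\le m-1$ with $z^{m-1}$-coefficient $b_{m-1}$. Assume $a(z)=\prod_{i=1}^m(z-\alpha_i)$ with $\alpha_i\in K$ pairwise distinct, $s_i:=b(\alpha_i)/a'(\alpha_i)\in\mathbb{Q}\setminus\mathbb{Z}_{\le-1}$ for all $i$, and $b_{m-1}\notin\mathbb{Z}_{<-1}$. For $0\le j\le m-2$ let \[f_j(z)=\prod_{i=1}^m\Bigl(1-\frac{\alpha_i}{z}\Bigr)^{s_i}\cdot\frac{1}{z^{j+1}}F^{(m)}_D\Bigl(b_{m-1}+j+1,\,1+s_1,\ldots,1+s_m,\,b_{m-1}+j+2;\,\frac{\alpha_1}{z},\ldots,\frac{\alpha_m}{z}\Bigr).\] Then $f_0,\ldots,f_{m-2}$ are linearly independent over $K$, and $L\cdot f_j(z)\in K[z]$ for $0\le j\le m-2$, where $L=-a(z)\frac{d}{dz}+b(z)$.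
   Context: $(x)_0=1$, $(x)_k=x(x+1)\cdots(x+k-1)$; $F^{(m)}_D(\alpha,\beta_1,\ldots,\beta_m,\gamma;z_1,\ldots,z_m)=\sum_{k_1,\ldots,k_m\ge0}\frac{(\alpha)_{k_1+\cdots+k_m}\prod_i(\beta_i)_{k_i}}{(\gamma)_{k_1+\cdots+k_m}\prod_ik_i!}\prod_i z_i^{k_i}$; $(1-\alpha/z)^s=\sum_{k\ge0}\frac{(-s)_k}{k!}\alpha^kz^{-k}$. These are formal series in $(1/z)K[[1/z]]$, and $L\cdot f=-af'+bf$ with termwise differentiation. *)

(* Defs.v *)
From HB Require Import structures.
From mathcomp Require Import all_boot all_order all_algebra all_field.
Set Implicit Arguments. Unset Strict Implicit. Unset Printing Implicit Defensive.
Import Order.TTheory GRing.Theory Num.Theory.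
Local Open Scope ring_scope.

(* Formal power series in w = 1/z are represented by their coefficient
   sequences  g : nat -> K,  meaning  sum_n g n * z^(-n). *)

Section Series.
Variable K : fieldType.

Definition poch (x : K) (k : nat) : K := \prod_(i < k) (x + i%:R).

Definition pser_mul (f g : nat -> K) : nat -> K :=
  fun n => \sum_(k < n.+1) f k * g (n - k)%N.

Definition pser_one : nat -> K := fun n => if n == 0%N then 1 else 0.

Definition pser_shift (d : nat) (f : nat -> K) : nat -> K :=
  fun n => if (d <= n)%N then f (n - d)%N else 0.

(* (1 - alpha/z)^s = sum_k (-s)_k / k! * alpha^k * z^{-k} *)
Definition binser (s alpha : K) : nat -> K :=
  fun k => poch (- s) k / (k`!)%:R * alpha ^+ k.

(* F_D^{(m)}(A, beta_1..beta_m, G; x_1/z, ..., x_m/z) as a series in 1/z: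
   coefficient of z^{-n} is the sum over k_1+...+k_m = n. *)
Definition FDser (m : nat) (A : K) (beta : 'I_m -> K) (G : K) (x : 'I_m -> K)
  : nat -> K :=
  fun n => \sum_(k : {ffun 'I_m -> 'I_n.+1} | (\sum_(i < m) (k i : nat) == n)%N)
     (poch A n / poch G n *
      \prod_(i < m) (poch (beta i) (k i) / ((k i)`!)%:R * x i ^+ (k i))).

(* Termwise derivative d/dz of sum_n f n z^{-n}: d/dz z^{-n} = -n z^{-n-1}. *)
Definition pser_deriv (f : nat -> K) : nat -> K :=
  fun n => match n with 0%N => 0 | n'.+1 => - (n'%:R * f n') end.

Definition lcoef (g : nat -> K) (k : int) : K :=
  if (k <= 0)%R then g `|k|%N else 0.

Definition polymul_coef (p : {poly K}) (g : nat -> K) (k : int) : K :=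
  \sum_(i < size p) p`_i * lcoef g (k - i%:Z).

Definition Lop (a b : {poly K}) (f : nat -> K) : int -> K :=
  fun k => - polymul_coef a (pser_deriv f) k + polymul_coef b f k.

(* A Laurent series (with finitely many positive powers) lies in K[z]
   iff all its coefficients at negative powers of z vanish. *)
Definition in_polyK (h : int -> K) : Prop := forall k : int, (k < 0)%R -> h k = 0.

End Series.

Definition fj (K : fieldType) (m : nat) (alpha : 'I_m -> K) (s : 'I_m -> K)
  (bm1 : K) (j : nat) : nat -> K :=
  pser_mul (foldr (@pser_mul K) (@pser_one K) [seq binser (s i) (alpha i) | i <- enum 'I_m])
    (pser_shift j.+1
       (FDser (bm1 + j.+1%:R) (fun i => 1 + s i) (bm1 + j.+2%:R) alpha)).

(* Main.v *)
Require Import Defs.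
From HB Require Import structures.
From mathcomp Require Import all_boot all_order all_algebra all_field.
From mathcomp Require Import ring zify.
Import Order.TTheory GRing.Theory Num.Theory.
Local Open Scope ring_scope.

Section Gen.
Variable K : fieldType.
Hypothesis char0 : forall n : nat, (n.+1)%:R != 0 :> K.
Implicit Types p q r : {poly K}.

Definition eqm (M : nat) p q := forall n, (n < M)%N -> p`_n = q`_n.
Definition tr (M : nat) (f : nat -> K) : {poly K} := \poly_(i < M) f i.
Definition th p := 'X * p^`().

Lemma coef_th p n : (th p)`_n = p`_n *+ n.
Proof. by rewrite /th coefXM; case: n => [|n] //=; rewrite coef_deriv. Qed.

Lemma th_mul p q : th (p * q) = th p * q + p * th q.
Proof. rewrite /th derivM; ring. Qed.

Lemma thD p q : th (p + q) = th p + th q.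
Proof. by rewrite /th derivD mulrDr. Qed.

Lemma thZ c p : th (c *: p) = c *: th p.
Proof. by rewrite /th derivZ scalerAr. Qed.

Lemma eqm_refl M p : eqm M p p. Proof. by []. Qed.
Lemma eqm_sym M p q : eqm M p q -> eqm M q p.
Proof. by move=> h n hn; rewrite h. Qed.
Lemma eqm_trans M p q r : eqm M p q -> eqm M q r -> eqm M p r.
Proof. by move=> h1 h2 n hn; rewrite h1 ?h2. Qed.
Lemma eqm_eq M p q : p = q -> eqm M p q. Proof. by move=> ->. Qed.
Lemma eqmD M p p' q q' : eqm M p p' -> eqm M q q' -> eqm M (p + q) (p' + q').
Proof. by move=> h1 h2 n hn; rewrite !coefD h1 ?h2. Qed.
Lemma eqmZ M c p p' : eqm M p p' -> eqm M (c *: p) (c *: p').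
Proof. by move=> h n hn; rewrite !coefZ h. Qed.
Lemma eqmM M p p' q q' : eqm M p p' -> eqm M q q' -> eqm M (p * q) (p' * q').
Proof.
move=> h1 h2 n hn; rewrite !coefM; apply: eq_bigr => -[k hk] _ /=.
rewrite h1 ?h2 //; first exact: leq_ltn_trans (leq_subr _ _) hn.
exact: leq_ltn_trans (hk : (k <= n)%N) hn.
Qed.
Lemma eqm_th M p q : eqm M p q -> eqm M (th p) (th q).
Proof. by move=> h n hn; rewrite !coef_th h. Qed.
Lemma eqm_le M N p q : (N <= M)%N -> eqm M p q -> eqm N p q.
Proof. by move=> hNM h n hn; apply: h; exact: leq_trans hn hNM. Qed.

Lemma eqm_prod M (I : Type) (r : seq I) (P : pred I) (F G : I -> {poly K}) :
  (forall i, P i -> eqm M (F i) (G i)) ->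
  eqm M (\prod_(i <- r | P i) F i) (\prod_(i <- r | P i) G i).
Proof.
move=> h; elim/big_ind2: _ => //; first by move=> *; apply: eqmM.
Qed.

Lemma coef_tr M f n : (n < M)%N -> (tr M f)`_n = f n.
Proof. by move=> hn; rewrite coef_poly hn. Qed.

Lemma eqm_tr M N f : (M <= N)%N -> eqm M (tr N f) (tr M f).
Proof. by move=> h n hn; rewrite !coef_tr //; exact: leq_trans hn h. Qed.

Lemma tr_mul M f g : eqm M (tr M (pser_mul f g)) (tr M f * tr M g).
Proof.
move=> n hn; rewrite coef_tr // coefM /pser_mul; apply: eq_bigr => -[k hk] _ /=.
rewrite !coef_tr //; first exact: leq_ltn_trans (leq_subr _ _) hn.
exact: leq_ltn_trans (hk : (k <= n)%N) hn.
Qed.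

Lemma tr_foldr M (I : Type) (l : seq I) (F : I -> nat -> K) :
  eqm M (tr M (foldr (@pser_mul K) (@pser_one K) [seq F i | i <- l]))
        (\prod_(i <- l) tr M (F i)).
Proof.
elim: l => [|x l IH] /=.
  by move=> n hn; rewrite big_nil coef_tr // coef1 /pser_one; case: (n == 0%N).
rewrite big_cons; apply: eqm_trans (tr_mul _ _ _) _.
exact: eqmM.
Qed.

Lemma coef_prod_tr (m n : nat) (F : 'I_m -> nat -> K) :
  (\prod_(i < m) tr n.+1 (F i))`_n =
  \sum_(k : {ffun 'I_m -> 'I_n.+1} | (\sum_(i < m) (k i : nat) == n)%N)
     \prod_(i < m) F i (k i).
Proof.
rewrite /tr; under eq_bigr do rewrite poly_def.
rewrite bigA_distr_bigA coef_sum [RHS]big_mkcond /=; apply: eq_bigr => k _.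
have -> : \prod_(i < m) (F i (k i) *: 'X^(k i)) =
          (\prod_(i < m) F i (k i))%:P * 'X^(\sum_(i < m) (k i : nat)).
  rewrite -prodrXr rmorph_prod -big_split /=; apply: eq_bigr => i _.
  by rewrite mul_polyC.
rewrite coefCM coefXn eq_sym; case: (_ == _); by rewrite ?mulr1 ?mulr0.
Qed.

Lemma coef_prod_trM (m M n : nat) (F : 'I_m -> nat -> K) : (n < M)%N ->
  (\prod_(i < m) tr M (F i))`_n =
  \sum_(k : {ffun 'I_m -> 'I_n.+1} | (\sum_(i < m) (k i : nat) == n)%N)
     \prod_(i < m) F i (k i).
Proof.
move=> hn; rewrite -coef_prod_tr.
have h : eqm n.+1 (\prod_(i < m) tr M (F i)) (\prod_(i < m) tr n.+1 (F i)).
  by apply: eqm_prod => i _; apply: eqm_tr.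
exact: h.
Qed.

Lemma pochS (x : K) k : poch x k.+1 = poch x k * (x + k%:R).
Proof. by rewrite /poch big_ord_recr. Qed.
Lemma pochS' (x : K) k : poch x k.+1 = x * poch (x + 1) k.
Proof.
rewrite /poch big_ord_recl addr0; congr (_ * _); apply: eq_bigr => i _.
by rewrite lift0 /= -addn1 natrD; ring.
Qed.
Lemma poch0 (x : K) : poch x 0 = 1. Proof. by rewrite /poch big_ord0. Qed.

Lemma binser0 (s a : K) : binser s a 0 = 1.
Proof. by rewrite /binser poch0 expr0 divr1 mulr1. Qed.

Lemma binser_ode M (s a : K) :
  eqm M ((1 - a *: 'X) * th (tr M (binser s a))) (- (s * a) *: ('X * tr M (binser s a))).
Proof.
move=> n hn; set B := tr M (binser s a).
rewrite mulrBl mul1r -scalerAl coefB coefZ (coefXM (th B)) coefZ (coefXM B).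
case: n hn => [|n] hn /=; first by rewrite coef_th mulr0n; ring.
rewrite !coef_th /B !coef_tr //; last exact: ltnW.
rewrite /binser pochS factS natrM exprS.
have h1 := char0 n.
have h2 : (n`!)%:R != 0 :> K.
  have := fact_gt0 n; case: (n`!) => // k _; exact: char0.
rewrite -[_ *+ n.+1]mulr_natr -[_ *+ n]mulr_natr.
field.
by rewrite h2 addrC natr1 h1.
Qed.

Lemma inv_lin M (a : K) P : eqm M ((1 - a *: 'X) * P) 0 -> eqm M P 0.
Proof.
move=> h; elim=> [|n IH] hn.
  by have := h 0%N hn; rewrite mulrBl mul1r -scalerAl coefB coefZ coefXM /= !coef0 mulr0 subr0.
have := h n.+1 hn; rewrite mulrBl mul1r -scalerAl coefB coefZ coefXM /=.
by rewrite IH ?(ltnW hn) // !coef0 mulr0 subr0.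
Qed.

Lemma th_zero M Q : eqm M (th Q) 0 -> Q`_0 = 1 -> eqm M Q 1.
Proof.
move=> h h0 [|n] hn; first by rewrite h0 coef1.
have := h n.+1 hn; rewrite coef_th coef0 coef1 /= -[_ *+ n.+1]mulr_natr => /eqP.
by rewrite mulf_eq0 (negPf (char0 n)) orbF => /eqP ->; rewrite mulr0n.
Qed.

Lemma binser_inv M (s a : K) :
  eqm M ((1 - a *: 'X) * tr M (binser s a) * tr M (binser (-1 - s) a)) 1.
Proof.
have [->|hM] := posnP M; first by [].
set u := 1 - a *: 'X; set B := tr M _; set C := tr M _.
have hu : th u = - a *: 'X.
  by rewrite /u /th derivB derivZ derivX derivC sub0r scaleNr mulrN -scalerAr mulr1.
apply: th_zero; last first.
  by rewrite !coef0M /u coefB coef1 coefZ coefX /= !coef_tr // !binser0; ring.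
apply: (@inv_lin _ a); rewrite -/u.
have hB := binser_ode M s a; have hC := binser_ode M (-1 - s) a; rewrite -/u in hB hC.
rewrite !th_mul hu.
apply: (@eqm_trans _ _ (u * (- a *: 'X) * B * C + (u * th B) * u * C + u * B * (u * th C))).
  apply: eqm_eq; ring.
apply: (@eqm_trans _ _ (u * (- a *: 'X) * B * C + (- (s * a) *: ('X * B)) * u * C
     + u * B * (- ((-1 - s) * a) *: ('X * C)))).
  apply: eqmD; first apply: eqmD => //.
  - by apply: eqmM => //; apply: eqmM.
  - by apply: eqmM => //.
apply: eqm_eq; rewrite -!mul_polyC !(polyCN, polyCM, polyCB, polyC1); ring.
Qed.

Definition rv (d : nat) p := \poly_(k < d.+1) p`_(d - k).

Lemma coef_rv d p k : (rv d p)`_k = if (k <= d)%N then p`_(d - k) else 0.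
Proof. by rewrite coef_poly ltnS. Qed.

Lemma rv_XsubC d p c : (size p <= d.+1)%N ->
  rv d.+1 (p * ('X - c%:P)) = rv d p * (1 - c *: 'X).
Proof.
move=> hs; apply/polyP => k.
rewrite coef_rv !mulrBr mulr1 -scalerAr !coefB coefMC coefZ !coefMX !coef_rv.
case: k => [|k] /=.
  by rewrite !subn0 (nth_default 0 hs) mul0r mulr0 !subr0.
rewrite subSS.
case: (ltnP k d) => hkd.
  rewrite (ltn_trans hkd (ltnSn d)) (ltnW hkd).
  have -> : (d - k == 0)%N = false by apply/negbTE; rewrite subn_eq0 -ltnNge.
  by rewrite subnS; ring.
case: (ltnP k d.+1) => hkd1.
  have -> : k = d by apply/eqP; rewrite eqn_leq hkd andbT -ltnS.
  by rewrite subnn eqxx leqnn; ring.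
by rewrite leqNgt hkd1 mulr0 subr0.
Qed.

Lemma size_prod_XsubC_cond (I : Type) (r : seq I) (P : pred I) (F : I -> K) :
  size (\prod_(i <- r | P i) ('X - (F i)%:P)) = (count P r).+1.
Proof. by rewrite -big_filter size_prod_XsubC size_filter. Qed.

Lemma rv_prod (I : Type) (r : seq I) (P : pred I) (F : I -> K) :
  rv (count P r) (\prod_(i <- r | P i) ('X - (F i)%:P)) =
  \prod_(i <- r | P i) (1 - F i *: 'X).
Proof.
elim: r => [|x r IH].
  rewrite !big_nil; apply/polyP => k; rewrite coef_rv !coef1; case: k => [|k] //=.
rewrite !big_cons /=; case: (P x) => //=.
rewrite add1n mulrC rv_XsubC; last by rewrite size_prod_XsubC_cond.
by rewrite IH mulrC.
Qed.

Lemma rv_sum d (I : Type) (r : seq I) (c : I -> K) (F : I -> {poly K}) :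
  rv d (\sum_(i <- r) c i *: F i) = \sum_(i <- r) c i *: rv d (F i).
Proof.
apply/polyP => k; rewrite coef_rv !coef_sum.
case: (leqP k d) => hk.
  by apply: eq_bigr => i _; rewrite !coefZ coef_rv hk.
by rewrite big1 // => i _; rewrite coefZ coef_rv leqNgt hk mulr0.
Qed.

Lemma coef_rvM d p q n : (d <= n)%N ->
  (rv d p * q)`_n = \sum_(i < d.+1) p`_i * q`_(n - d + i).
Proof.
move=> hdn; rewrite /rv poly_def mulr_suml coef_sum.
rewrite (reindex_inj rev_ord_inj) /=; apply: eq_bigr => i _.
rewrite -scalerAl coefZ coefXnM.
have hi : (i <= d)%N by rewrite -ltnS.
rewrite subKn //.
have -> : (n < d - i)%N = false by apply/negbTE; rewrite -leqNgt; lia.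
congr (_ * q`__); lia.
Qed.

Lemma th_prod (I : eqType) (r : seq I) (F : I -> {poly K}) : uniq r ->
  th (\prod_(i <- r) F i) =
  \sum_(i <- r) th (F i) * \prod_(j <- r | j != i) F j.
Proof.
elim: r => [|x r IH] /=.
  by rewrite !big_nil /th derivC mulr0.
move=> /andP [hx hu]; rewrite !big_cons th_mul IH // eqxx /=.
congr (_ + _).
  congr (_ * _); rewrite [RHS]big_seq_cond [LHS]big_seq; apply: eq_bigl => j.
  case hj : (j \in r) => //=; have hne : j != x by apply: contraNneq hx => ej; rewrite -ej hj.
  by rewrite hne.
transitivity (\sum_(i <- r) F x * (th (F i) * \prod_(j <- r | j != i) F j)).
  exact: big_distrr.
rewrite [LHS]big_seq [RHS]big_seq; apply: eq_bigr => i hi.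
have hne : x != i by apply: contraNneq hx => ->.
rewrite big_cons hne; ring.
Qed.

Lemma eqm_sum M (I : Type) (r : seq I) (P : pred I) (F G : I -> {poly K}) :
  (forall i, P i -> eqm M (F i) (G i)) ->
  eqm M (\sum_(i <- r | P i) F i) (\sum_(i <- r | P i) G i).
Proof.
move=> h; elim/big_ind2: _ => //; first by move=> *; apply: eqmD.
Qed.


Lemma cntC1 m (i : 'I_m) : count (fun l => l != i) (index_enum 'I_m) = m.-1.
Proof. have h := cardC1 i; rewrite card_ord in h; rewrite -h -sum1_count -sum1_card. by []. Qed.
Lemma cntT m : count (fun _ => true) (index_enum 'I_m) = m.
Proof. have h := card_ord m. by rewrite -sum1_count -[RHS]h -sum1_card. Qed.

Section Lag.
Variables (m : nat) (alpha : 'I_m -> K) (s : 'I_m -> K) (a b : {poly K}).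
Hypothesis halpha : injective alpha.
Hypothesis ha : a = \prod_(i < m) ('X - (alpha i)%:P).
Hypothesis hb : (size b <= m)%N.
Hypothesis hs : forall i, s i = b.[alpha i] / (a^`()).[alpha i].

Definition qq i := \prod_(l < m | l != i) ('X - (alpha l)%:P).

Lemma size_qq i : size (qq i) = m.
Proof.
rewrite /qq size_prod_XsubC_cond cntC1; case: m i => [|m'] i //; by case: i.
Qed.

Lemma qq_ev i k : (qq i).[alpha k] =
  if k == i then \prod_(l < m | l != i) (alpha i - alpha l) else 0.
Proof.
rewrite /qq horner_prod; case: eqP => [->|/eqP hki].
  by apply: eq_bigr => l _; rewrite hornerXsubC.
by rewrite (bigD1 k hki) /= hornerXsubC subrr mul0r.
Qed.

Lemma der_ev k : (a^`()).[alpha k] = \prod_(l < m | l != k) (alpha k - alpha l).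
Proof.
rewrite ha (bigD1 k) //= derivM derivXsubC mul1r hornerD hornerM hornerXsubC subrr mul0r addr0.
by have := qq_ev k k; rewrite eqxx.
Qed.

Lemma der_nz k : \prod_(l < m | l != k) (alpha k - alpha l) != 0.
Proof.
apply/prodf_neq0 => l hl; rewrite subr_eq0; apply: contra hl => /eqP /halpha ->.
by rewrite eqxx.
Qed.

Lemma lagrange : b = \sum_(i < m) s i *: qq i.
Proof.
apply/eqP; rewrite -subr_eq0; apply/eqP.
set D := b - _.
apply/eqP; apply: contraT => hD.
have hroots : all (root D) [seq alpha k | k <- enum 'I_m].
  apply/allP => x /mapP [k _ ->]; rewrite /root /D hornerD hornerN horner_sum.
  rewrite (bigD1 k) //= big1 => [|i hik]; last first.
    by rewrite hornerZ qq_ev eq_sym (negPf hik) mulr0.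
  rewrite addr0 hornerZ qq_ev eqxx hs der_ev mulrC mulrA mulrC mulrA mulVf ?der_nz //.
  by rewrite mul1r subrr.
have := max_poly_roots hD hroots; rewrite map_inj_uniq // enum_uniq size_map size_enum_ord.
move=> /(_ isT); rewrite ltnNge => /negP H; exfalso; apply: H.
rewrite /D; apply: leq_trans (size_add _ _) _; rewrite geq_max hb size_opp /=.
elim/big_ind: _ => //; first by rewrite size_poly0.
  by move=> p q hp hq; apply: leq_trans (size_add _ _) _; rewrite geq_max hp hq.
by move=> i _; apply: leq_trans (size_scale_leq _ _) _; rewrite size_qq.
Qed.

Lemma bm1_sum : b`_m.-1 = \sum_(i < m) s i.
Proof.
rewrite {1}lagrange coef_sum; apply: eq_bigr => i _; rewrite coefZ.
have : qq i \is monic by apply: monic_prod_XsubC.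
by move/monicP; rewrite lead_coefE size_qq => ->; rewrite mulr1.
Qed.

Lemma rv_a : size a = m.+1 -> rv m a = \prod_(i < m) (1 - alpha i *: 'X).
Proof. by move=> _; rewrite ha -rv_prod cntT. Qed.

Lemma rv_b : rv m.-1 b = \sum_(i < m) s i *: \prod_(l < m | l != i) (1 - alpha l *: 'X).
Proof.
rewrite {1}lagrange rv_sum; apply: eq_bigr => i _.
have h := @rv_prod _ (index_enum 'I_m) (fun l => l != i) alpha.
by rewrite cntC1 in h; rewrite /qq h.
Qed.

End Lag.


Section WODE.
Variables (m : nat) (alpha : 'I_m -> K) (s : 'I_m -> K) (M : nat).
Let u i := 1 - alpha i *: 'X.
Let B i := tr M (binser (s i) (alpha i)).

Lemma W_ode :
  eqm M ((\prod_i u i) * th (\prod_i B i) +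
         (\sum_i s i *: \prod_(l | l != i) u l) * \prod_i B i)
        ((\sum_i s i) *: ((\prod_i u i) * \prod_i B i)).
Proof.
rewrite th_prod ?index_enum_uniq //.
set W := \prod_i B i.
have key : forall i, eqm M ((\prod_j u j) * (th (B i) * \prod_(j | j != i) B j))
   ((- (s i * alpha i)) *: ('X * \prod_(j | j != i) u j * W)).
  move=> i.
  have hu : \prod_j u j = u i * \prod_(j | j != i) u j by rewrite (bigD1 i).
  have hW : W = B i * \prod_(j | j != i) B j by rewrite /W (bigD1 i).
  rewrite hu.
  apply: (@eqm_trans _ _ ((u i * th (B i)) * (\prod_(j | j != i) u j) * \prod_(j | j != i) B j)).
    by apply: eqm_eq; ring.
  apply: (@eqm_trans _ _ ((- (s i * alpha i) *: ('X * B i)) * (\prod_(j | j != i) u j) * \prod_(j | j != i) B j)).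
    apply: eqmM => //; apply: eqmM => //; exact: binser_ode.
  by apply: eqm_eq; rewrite hW -!scalerAl; congr (_ *: _); ring.
apply: (@eqm_trans _ _ (\sum_i (- (s i * alpha i)) *: ('X * \prod_(j | j != i) u j * W)
         + (\sum_i s i *: \prod_(l | l != i) u l) * W)).
  apply: eqmD => //; rewrite big_distrr /=; exact: eqm_sum.
apply: eqm_eq; rewrite big_distrl /= -big_split /= scaler_suml; apply: eq_bigr => i _.
rewrite [in RHS](bigD1 i) //= /u.
rewrite -!mul_polyC !(polyCN, polyCM, polyCB, polyC1); ring.
Qed.

End WODE.


Lemma lcoefN (g : nat -> K) (N i : nat) : lcoef g (- (N%:Z) - (i%:Z)) = g (N + i)%N.
Proof.
have -> : - (N%:Z) - (i%:Z) = - ((N + i)%N%:Z) by rewrite PoszD opprD.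
by rewrite /lcoef oppr_le0 /= abszN absz_nat.
Qed.

Lemma Lop_H (a b : {poly K}) m' f N : size a = m'.+2 -> (size b <= m'.+1)%N -> (0 < N)%N ->
  Lop a b f (- (N%:Z)) =
  (rv m'.+1 a * th (tr (N + m'.+1) f) + rv m' b * tr (N + m'.+1) f)`_(N + m').
Proof.
move=> ha hb hN.
rewrite coefD !coef_rvM; [|lia|lia].
rewrite /Lop /polymul_coef ha; congr (_ + _).
  rewrite -sumrN; apply: eq_bigr => i _.
  case: N hN => [|N] // _.
  rewrite lcoefN addSn /pser_deriv mulrN opprK coef_th coef_tr; last first.
    have := ltn_ord i; lia.
  have -> : (N.+1 + m' - m'.+1 + i = N + i)%N by lia.
  by rewrite mulr_natl.
rewrite (big_ord_widen m'.+1 (fun i => b`_i * lcoef f (- (N%:Z) - (i%:Z)))) //.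
rewrite big_mkcond /=; apply: eq_bigr => i _.
rewrite coef_tr; last by have := ltn_ord i; lia.
case: ifP => hi.
  by rewrite lcoefN; congr (_ * f _); lia.
by rewrite nth_default ?mul0r // leqNgt hi.
Qed.

Lemma pochA (A : K) k : poch (A + 1) k != 0 -> (A + k%:R) * (poch A k / poch (A + 1) k) = A.
Proof.
by move=> h; rewrite mulrA [_ * poch A k]mulrC -pochS pochS' -mulrA mulfV // mulr1.
Qed.

Section G.
Variables (m : nat) (alpha s : 'I_m -> K) (bm1 : K) (j : nat).
Hypothesis hbm1 : forall n : nat, bm1 != - (n.+2)%:R.
Let A := bm1 + j.+1%:R.
Let gser := pser_shift j.+1 (FDser A (fun i => 1 + s i) (bm1 + j.+2%:R) alpha).

Lemma hGA : bm1 + j.+2%:R = A + 1.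
Proof. by rewrite /A -addrA natr1. Qed.

Lemma pochG_nz k : poch (A + 1) k != 0.
Proof.
apply/prodf_neq0 => i _; apply: contra (hbm1 (j + i)) => /eqP e.
rewrite -subr_eq0 opprK; apply/eqP; rewrite -e /A !mulrS natrD; ring.
Qed.

Lemma FD_coef M k : (k < M)%N ->
  FDser A (fun i => 1 + s i) (bm1 + j.+2%:R) alpha k =
  poch A k / poch (A + 1) k * (\prod_(i < m) tr M (binser (-1 - s i) (alpha i)))`_k.
Proof.
move=> hk; rewrite coef_prod_trM // /FDser -big_distrr hGA /=; congr (_ * _).
apply: eq_bigr => kk _; apply: eq_bigr => i _.
by rewrite /binser; congr (poch _ _ / _ * _); ring.
Qed.

Lemma g_ode M :
  eqm M (th (tr M gser) + bm1 *: tr M gser)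
        (A *: ('X^(j.+1) * \prod_(i < m) tr M (binser (-1 - s i) (alpha i)))).
Proof.
move=> n hn; rewrite coefD coef_th !coefZ coefXnM coef_tr // /gser /pser_shift.
case: (ltnP n j.+1) => h.
  by rewrite mul0rn !mulr0 addr0.
rewrite (@FD_coef M); last by apply: leq_ltn_trans (leq_subr _ _) hn.
rewrite -[_ *+ n]mulr_natl -mulrDl mulrA; congr (_ * _).
have e : (n%:R + bm1 : K) = A + (n - j.+1)%:R.
  by rewrite /A -addrA -natrD subnKC // addrC.
by rewrite e pochA // pochG_nz.
Qed.

Lemma FD0 : FDser A (fun i => 1 + s i) (bm1 + j.+2%:R) alpha 0 = 1.
Proof.
rewrite (@FD_coef 1) // !poch0 divr1 mul1r coef0_prod big1 // => i _.
by rewrite coef_tr // binser0.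
Qed.

End G.

Lemma foldr0 (I : Type) (l : seq I) (F : I -> nat -> K) :
  (forall i, F i 0%N = 1) ->
  foldr (@pser_mul K) (@pser_one K) [seq F i | i <- l] 0%N = 1.
Proof.
move=> h; elim: l => [|x l IH] //=.
by rewrite /pser_mul big_ord1 /= h IH mul1r.
Qed.

End Gen.

Lemma char0_ext (K : fieldExtType rat) n : (n.+1)%:R != 0 :> K.
Proof. by rewrite -(rmorph_nat (in_alg K)) fmorph_eq0 pnatr_eq0. Qed.

Lemma fj_low (K : fieldType) m (alpha s : 'I_m -> K) bm1 j n :
  (n <= j)%N -> fj alpha s bm1 j n = 0.
Proof.
move=> h; rewrite /fj /pser_mul big1 // => k _; rewrite /pser_shift ifN ?mulr0 //.
by rewrite -ltnNge ltnS; apply: leq_trans (leq_subr _ _) h.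
Qed.

Lemma fj_lead (K : fieldType) m (alpha s : 'I_m -> K) bm1 j :
  (forall n : nat, bm1 != - (n.+2)%:R) -> fj alpha s bm1 j j.+1 = 1.
Proof.
move=> hb; rewrite /fj /pser_mul big_ord_recl big1 ?addr0 => [|k _].
  rewrite /= foldr0 => [|i]; last exact: binser0.
  by rewrite subn0 /pser_shift leqnn subnn FD0 // mul1r.
rewrite /pser_shift ifN ?mulr0 //= -ltnNge ltnS subSS; exact: leq_subr.
Qed.

Theorem lemma4p1 (K : fieldExtType rat) (m : nat) (hm : (2 <= m)%N)
  (a b : {poly K}) (alpha : 'I_m -> K) (s : 'I_m -> rat)
  (ha_monic : a \is monic) (ha_size : size a = m.+1)
  (hb_size : (size b <= m)%N)
  (ha_fact : a = \prod_(i < m) ('X - (alpha i)%:P))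
  (halpha : injective alpha)
  (hs : forall i, ratr (s i) = b.[alpha i] / (a^`()).[alpha i])
  (hs_int : forall i (n : nat), s i != - (n.+1)%:R)
  (hb_int : forall n : nat, b`_m.-1 != - (n.+2)%:R) :
  (forall c : 'I_m.-1 -> K,
     (forall n : nat,
        \sum_(j < m.-1) c j * fj alpha (fun i => ratr (s i)) b`_m.-1 j n = 0) ->
     forall j, c j = 0)
  /\
  (forall j : nat, (j <= m - 2)%N ->
     in_polyK (Lop a b (fj alpha (fun i => ratr (s i)) b`_m.-1 j))).
Proof.
set sK := fun i => ratr (s i) : K.
have char0 := char0_ext K.
split.
  move=> c hc.
  suff H : forall k (hk : (k < m.-1)%N), c (Ordinal hk) = 0.
    by move=> [k hk]; exact: H.
  elim/ltn_ind => k IH hk.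
  have := hc k.+1; rewrite (bigD1 (Ordinal hk)) //= fj_lead // mulr1 big1 ?addr0 //.
  move=> [i hi] hne; case: (ltngtP i k) => hik.
  - by rewrite IH ?mul0r.
  - by rewrite fj_low ?mulr0.
  - by exfalso; move: hne; rewrite /= -(inj_eq val_inj) /= hik eqxx.
move=> j hj [n|n] hk //.
rewrite NegzE.
have hs' : forall i, sK i = b.[alpha i] / (a^`()).[alpha i] by [].
have hbm := @bm1_sum _ _ _ _ _ _ halpha ha_fact hb_size hs'.
have hra := @rv_a _ _ _ _ ha_fact ha_size.
have hrb := @rv_b _ _ _ _ _ _ halpha ha_fact hb_size hs'.
move: hra hrb hbm hb_int hj.
set bm1 := b`_m.-1.
have [m' em] : exists m', m = m'.+2 by exists m.-2; lia.
subst m => hra hrb hbm hb_int hj /=.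
rewrite (@Lop_H _ a b m'.+1) //; rewrite /= in hrb; rewrite /fj.
set N := n.+1; set M := (N + m'.+2)%N.
set u := fun i : 'I_m'.+2 => 1 - alpha i *: 'X.
set B := fun i : 'I_m'.+2 => tr K M (binser (sK i) (alpha i)).
set C := \prod_(i < m'.+2) tr K M (binser (-1 - sK i) (alpha i)).
set W := \prod_i B i.
set gser := pser_shift j.+1 _.
set T := tr K M _.
set A := bm1 + j.+1%:R.
set Gs := tr K M gser.
have hT : eqm K M T (W * Gs).
  apply: (@eqm_trans _ _ _ _ _ (tr_mul _ _ _ _)); apply: eqmM => //.
  apply: (@eqm_trans _ _ _ _ _ (tr_foldr _ _ _ _ _)).
  by apply: eqm_eq; rewrite /W big_enum /=; apply: eq_bigl => i.
have hUWC : eqm K M (\prod_i u i * W * C) 1.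
  rewrite /W /C -!big_split /=.
  apply: (@eqm_trans _ _ _ (\prod_(i < m'.+2) 1)).
    by apply: eqm_prod => i _; rewrite /u /B; exact: (@binser_inv _ char0).
  by apply: eqm_eq; rewrite big1_eq.
have hG := @g_ode _ _ alpha sK _ j hb_int M; rewrite -/gser -/Gs -/A -/C in hG.
have hW := @W_ode _ char0 _ alpha sK M; rewrite -/W /= in hW.
have E : eqm K M (rv K m'.+2 a * th K T + rv K m'.+1 b * T) (A *: 'X^(j.+1) * 1).
  rewrite hra hrb.
  set U := \prod_i _; set bt := \sum_i _.
  apply: (@eqm_trans _ _ _ (U * th K (W * Gs) + bt * (W * Gs))).
    by apply: eqmD; apply: eqmM => //; apply: eqm_th.
  apply: (@eqm_trans _ _ _ ((U * th K W + bt * W) * Gs + U * W * th K Gs)).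
    by apply: eqm_eq; rewrite th_mul; ring.
  apply: (@eqm_trans _ _ _ (((\sum_i sK i) *: (U * W)) * Gs + U * W * th K Gs)).
    by apply: eqmD => //; apply: eqmM.
  apply: (@eqm_trans _ _ _ (U * W * (th K Gs + bm1 *: Gs))).
    by apply: eqm_eq; rewrite hbm -!mul_polyC; ring.
  apply: (@eqm_trans _ _ _ (U * W * (A *: ('X^(j.+1) * C)))).
    by apply: eqmM.
  apply: (@eqm_trans _ _ _ (A *: 'X^(j.+1) * (U * W * C))).
    by apply: eqm_eq; rewrite -!mul_polyC; ring.
  by apply: eqmM.
rewrite E; last by rewrite /M /N; lia.
rewrite mulr1 coefZ coefXn.
have -> : (N + m'.+1 == j.+1)%N = false by apply/negbTE; rewrite /N; lia.
by rewrite mulr0.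
Qed.
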